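(* Let $\alpha\in(0,1)$ and let $\phi:[0,1]\to[0,\infty)$ be four times continuously differentiable on $(0,1]$ with finite constants $W>0$, $c$, $c'$ such that $(2-\alpha)(3-\alpha)(4-\alpha)Wp^{\alpha-4}+c'\le|\phi^{(4)}(p)|\le(2-\alpha)(3-\alpha)(4-\alpha)Wp^{\alpha-4}+c$ for all $p\in(0,1]$. Let $n\ge1$, and $\Delta,p$ with $\frac1n\lesssim\Delta<p\le1$, and let $\tilde N\sim\mathrm{Poisson}(np)$. Then $$\mathrm{Bias}\Big[\bar\phi_\Delta\Big(\frac{\tilde N}{n}\Big)-\frac{\tilde N}{2n^2}\bar\phi_\Delta^{(2)}\Big(\frac{\tilde N}{n}\Big)-\phi(p)\Big]\lesssim\frac{1}{n^2\Delta^{2-\alpha}}+\frac{p}{n^2}.$$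
   Context: For the Bernstein basis $B_{\nu,N}(t)=\binom N\nu t^\nu(1-t)^{N-\nu}$ define $H_L(x;\phi,a,b)=\phi(a)+\sum_{m=1}^L\frac{\phi^{(m)}(a)}{m!}(x-a)^m\sum_{\ell=0}^{L-m}\frac{L+1}{L+\ell+1}B_{\ell,L+\ell+1}\big(\tfrac{x-a}{b-a}\big)$ (derivatives at $1$ are one-sided). For $\Delta\in(0,1]$, $\bar\phi_\Delta:[0,\infty)\to\mathbb{R}$ is $\bar\phi_\Delta(x)=H_4(\Delta/2;\phi,\Delta,\Delta/2)$ if $x\le\Delta/2$; $H_4(x;\phi,\Delta,\Delta/2)$ if $\Delta/2<x<\Delta$; $\phi(x)$ if $\Delta\le x\le1$; $H_4(x;\phi,1,2)$ if $1<x<2$; $H_4(2;\phi,1,2)$ if $x\ge2$; $\bar\phi^{(2)}_\Delta$ is its second derivative. For a random variable $Y$, $\mathrm{Bias}[Y]=|\mathbb{E}[Y]|$. $a\lesssim b$ means $a\le Cb$ for a positive constant $C$ not depending on $n,\Delta,p$ (possibly on $\phi,\alpha$); $\frac1n\lesssim\Delta$ means $\Delta\ge c_0/n$ for a fixed constant $c_0>0$. *)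

(* Defs.v *)
From Stdlib Require Import Reals Lra.
From Coquelicot Require Import Coquelicot.
Open Scope R_scope.

Definition bernstein (nu N : nat) (t : R) : R :=
  Binomial.C N nu * t ^ nu * (1 - t) ^ (N - nu).

Definition I01 (x : R) : Prop := 0 < x <= 1.

Definition is_derive_I01 (f : R -> R) (x l : R) : Prop :=
  filterlim (fun y => (f y - f x) / (y - x))
    (within (fun y => I01 y /\ y <> x) (locally x)) (locally l).

Definition C4_derivs_I01 (phi : R -> R) (D : nat -> R -> R) : Prop :=
  (forall x, I01 x -> is_derive_I01 phi x (D 1%nat x)) /\
  (forall k x, (1 <= k <= 3)%nat -> I01 x -> is_derive_I01 (D k) x (D (S k) x)) /\
  (forall x, I01 x -> filterlim (D 4%nat) (within I01 (locally x)) (locally (D 4%nat x))).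

(* H_L(x; phi, a, b), with phi^{(m)}(a) = D m a for m >= 1. *)
Definition H (L : nat) (phi : R -> R) (D : nat -> R -> R) (a b x : R) : R :=
  phi a + sum_n_m (fun m =>
     D m a / INR (Factorial.fact m) * (x - a) ^ m *
     sum_n_m (fun l => INR (L + 1) / INR (L + l + 1) *
                       bernstein l (L + l + 1) ((x - a) / (b - a)))
             0 (L - m)) 1 L.

(* bar phi_Delta (defined on [0,oo); for x < 0 we extend by the constant of
   the first branch, which is irrelevant for x >= 0 values and makes the
   second derivative at 0 the one-sided one). *)
Definition phibar (phi : R -> R) (D : nat -> R -> R) (Delta x : R) : R :=
  if Rle_dec x (Delta / 2) then H 4 phi D Delta (Delta / 2) (Delta / 2)
  else if Rlt_dec x Delta then H 4 phi D Delta (Delta / 2) x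
  else if Rle_dec x 1 then phi x
  else if Rlt_dec x 2 then H 4 phi D 1 2 x
  else H 4 phi D 1 2 2.

Definition poisson_pmf (lam : R) (k : nat) : R :=
  exp (- lam) * lam ^ k / INR (Factorial.fact k).

(* The random quantity inside the bias, as a function of N~ = k. *)
Definition estimator_err (phi : R -> R) (D : nat -> R -> R) (n : nat)
    (Delta p : R) (k : nat) : R :=
  phibar phi D Delta (INR k / INR n)
  - INR k / (2 * INR n ^ 2) * Derive_n (phibar phi D Delta) 2 (INR k / INR n)
  - phi p.

(* Main.v *)
Require Import Defs.
From Stdlib Require Import Reals.
From Coquelicot Require Import Coquelicot.
From Stdlib Require Import Lra Lia.
Open Scope R_scope.

Lemma isr_plus (a b : nat -> R) la lb : is_series a la -> is_series b lb ->
  is_series (fun n => a n + b n) (la + lb).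
Proof. intros Ha Hb. exact (is_series_plus a b la lb Ha Hb). Qed.

Lemma isr_scal (c : R) (a : nat -> R) la : is_series a la ->
  is_series (fun n => c * a n) (c * la).
Proof. intros Ha. exact (is_series_scal_l c a la Ha). Qed.

Lemma isr_ext (a b : nat -> R) l : (forall n, a n = b n) -> is_series a l -> is_series b l.
Proof. intros H1 H2. exact (is_series_ext a b l H1 H2). Qed.

Lemma isr_decr (a : nat -> R) l : a O = 0 -> is_series (fun k => a (S k)) l -> is_series a l.
Proof. intros H0 H. apply is_series_decr_1. rewrite H0. unfold plus, opp, zero; simpl.
  change (is_series (fun k : nat => a (S k)) (l + - 0)). rewrite Ropp_0, Rplus_0_r. exact H. Qed.

Lemma pois_total lam : is_series (poisson_pmf lam) 1.
Proof.
  pose proof (is_exp_Reals lam) as H. unfold is_pseries in H.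
  apply (isr_scal (exp (- lam))) in H.
  replace 1 with (exp (-lam) * exp lam).
  2:{ rewrite <- exp_plus. replace (-lam + lam) with 0 by ring. apply exp_0. }
  eapply isr_ext. 2: exact H.
  intros k. unfold poisson_pmf. simpl. rewrite pow_n_pow. unfold scal; simpl.
  unfold mult; simpl. field. apply INR_fact_neq_0.
Qed.

Fixpoint ffr (r : nat) (x : R) : R :=
  match r with O => 1 | S r => x * ffr r (x - 1) end.

Lemma pmf_S lam k : poisson_pmf lam (S k) * INR (S k) = lam * poisson_pmf lam k.
Proof.
  unfold poisson_pmf. rewrite fact_simpl, mult_INR. simpl pow.
  field. split. apply INR_fact_neq_0. apply not_0_INR. lia.
Qed.

Lemma pois_ff lam r : is_series (fun k => poisson_pmf lam k * ffr r (INR k)) (lam ^ r).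
Proof.
  induction r.
  - simpl. eapply isr_ext. 2: apply (pois_total lam). intros. simpl. ring.
  - apply isr_decr. simpl. ring. replace (lam ^ S r) with (lam * lam ^ r) by (simpl; ring).
    eapply isr_ext. 2: apply (isr_scal lam _ _ IHr).
    intros k. change (ffr (S r) (INR (S k))) with (INR (S k) * ffr r (INR (S k) - 1)).
    replace (INR (S k) - 1) with (INR k) by (rewrite S_INR; ring).
    rewrite <- (Rmult_assoc (poisson_pmf lam (S k))), pmf_S. ring.
Qed.

Lemma pois_poly4 lam a0 a1 a2 a3 a4 :
  is_series (fun k => poisson_pmf lam k *
     (a0 + a1 * INR k + a2 * INR k ^ 2 + a3 * INR k ^ 3 + a4 * INR k ^ 4))
   (a0 + (a1+a2+a3+a4)*lam + (a2+3*a3+7*a4)*lam^2 + (a3+6*a4)*lam^3 + a4*lam^4).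
Proof.
  pose proof (isr_plus _ _ _ _ (isr_scal a0 _ _ (pois_ff lam 0))
    (isr_plus _ _ _ _ (isr_scal (a1+a2+a3+a4) _ _ (pois_ff lam 1))
    (isr_plus _ _ _ _ (isr_scal (a2+3*a3+7*a4) _ _ (pois_ff lam 2))
    (isr_plus _ _ _ _ (isr_scal (a3+6*a4) _ _ (pois_ff lam 3))
      (isr_scal a4 _ _ (pois_ff lam 4)))))) as H.
  eapply isr_ext. 2: { replace (a0 + (a1+a2+a3+a4)*lam + (a2+3*a3+7*a4)*lam^2 + (a3+6*a4)*lam^3 + a4*lam^4)
   with (a0 * lam ^ 0 + ((a1+a2+a3+a4) * lam ^ 1 + ((a2+3*a3+7*a4) * lam^2 + ((a3+6*a4)*lam^3 + a4*lam^4)))) by ring. exact H. }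
  intros k. simpl. ring.
Qed.

Lemma pois_cpoly lam b0 b1 b2 b3 b4 :
  is_series (fun k => poisson_pmf lam k *
     (b0 + b1 * (INR k - lam) + b2 * (INR k - lam) ^ 2 + b3 * (INR k - lam) ^ 3
        + b4 * (INR k - lam) ^ 4))
   (b0 + b2 * lam + b3 * lam + b4 * (3 * lam^2 + lam)).
Proof.
  pose proof (pois_poly4 lam
    (b0 - lam*b1 + lam^2*b2 - lam^3*b3 + lam^4*b4)
    (b1 - 2*lam*b2 + 3*lam^2*b3 - 4*lam^3*b4)
    (b2 - 3*lam*b3 + 6*lam^2*b4)
    (b3 - 4*lam*b4) b4) as H.
  eapply isr_ext. 2: { 
    match type of H with is_series _ ?v => replace (b0 + b2 * lam + b3 * lam + b4 * (3 * lam^2 + lam)) with v by ring end.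
    exact H. }
  intros k. simpl. ring.
Qed.

Definition Rp (m i : nat) (t : R) : R :=
  match m, i with
  | 1%nat, 0%nat => (1) * t ^ 1 + (-70) * t ^ 5 + (224) * t ^ 6 + (-280) * t ^ 7 + (160) * t ^ 8 + (-35) * t ^ 9
  | 1%nat, 1%nat => (1) * t ^ 0 + (-350) * t ^ 4 + (1344) * t ^ 5 + (-1960) * t ^ 6 + (1280) * t ^ 7 + (-315) * t ^ 8
  | 1%nat, 2%nat => (-1400) * t ^ 3 + (6720) * t ^ 4 + (-11760) * t ^ 5 + (8960) * t ^ 6 + (-2520) * t ^ 7
  | 1%nat, 3%nat => (-4200) * t ^ 2 + (26880) * t ^ 3 + (-58800) * t ^ 4 + (53760) * t ^ 5 + (-17640) * t ^ 6
  | 1%nat, 4%nat => (-8400) * t ^ 1 + (80640) * t ^ 2 + (-235200) * t ^ 3 + (268800) * t ^ 4 + (-105840) * t ^ 5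
  | 2%nat, 0%nat => (1) * t ^ 2 + (-35) * t ^ 5 + (105) * t ^ 6 + (-126) * t ^ 7 + (70) * t ^ 8 + (-15) * t ^ 9
  | 2%nat, 1%nat => (2) * t ^ 1 + (-175) * t ^ 4 + (630) * t ^ 5 + (-882) * t ^ 6 + (560) * t ^ 7 + (-135) * t ^ 8
  | 2%nat, 2%nat => (2) * t ^ 0 + (-700) * t ^ 3 + (3150) * t ^ 4 + (-5292) * t ^ 5 + (3920) * t ^ 6 + (-1080) * t ^ 7
  | 2%nat, 3%nat => (-2100) * t ^ 2 + (12600) * t ^ 3 + (-26460) * t ^ 4 + (23520) * t ^ 5 + (-7560) * t ^ 6
  | 2%nat, 4%nat => (-4200) * t ^ 1 + (37800) * t ^ 2 + (-105840) * t ^ 3 + (117600) * t ^ 4 + (-45360) * t ^ 5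
  | 3%nat, 0%nat => (1) * t ^ 3 + (-15) * t ^ 5 + (40) * t ^ 6 + (-45) * t ^ 7 + (24) * t ^ 8 + (-5) * t ^ 9
  | 3%nat, 1%nat => (3) * t ^ 2 + (-75) * t ^ 4 + (240) * t ^ 5 + (-315) * t ^ 6 + (192) * t ^ 7 + (-45) * t ^ 8
  | 3%nat, 2%nat => (6) * t ^ 1 + (-300) * t ^ 3 + (1200) * t ^ 4 + (-1890) * t ^ 5 + (1344) * t ^ 6 + (-360) * t ^ 7
  | 3%nat, 3%nat => (6) * t ^ 0 + (-900) * t ^ 2 + (4800) * t ^ 3 + (-9450) * t ^ 4 + (8064) * t ^ 5 + (-2520) * t ^ 6
  | 3%nat, 4%nat => (-1800) * t ^ 1 + (14400) * t ^ 2 + (-37800) * t ^ 3 + (40320) * t ^ 4 + (-15120) * t ^ 5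
  | 4%nat, 0%nat => (1) * t ^ 4 + (-5) * t ^ 5 + (10) * t ^ 6 + (-10) * t ^ 7 + (5) * t ^ 8 + (-1) * t ^ 9
  | 4%nat, 1%nat => (4) * t ^ 3 + (-25) * t ^ 4 + (60) * t ^ 5 + (-70) * t ^ 6 + (40) * t ^ 7 + (-9) * t ^ 8
  | 4%nat, 2%nat => (12) * t ^ 2 + (-100) * t ^ 3 + (300) * t ^ 4 + (-420) * t ^ 5 + (280) * t ^ 6 + (-72) * t ^ 7
  | 4%nat, 3%nat => (24) * t ^ 1 + (-300) * t ^ 2 + (1200) * t ^ 3 + (-2100) * t ^ 4 + (1680) * t ^ 5 + (-504) * t ^ 6
  | 4%nat, 4%nat => (24) * t ^ 0 + (-600) * t ^ 1 + (3600) * t ^ 2 + (-8400) * t ^ 3 + (8400) * t ^ 4 + (-3024) * t ^ 5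
  | _, _ => 0
  end.

Definition HD (phi : R -> R) (D : nat -> R -> R) (i : nat) (a b x : R) : R :=
  (match i with O => phi a | _ => 0 end) +
  (D 1%nat a * (b - a) ^ 1 * Rp 1 i ((x - a) / (b - a))
   + D 2%nat a / 2 * (b - a) ^ 2 * Rp 2 i ((x - a) / (b - a))
   + D 3%nat a / 6 * (b - a) ^ 3 * Rp 3 i ((x - a) / (b - a))
   + D 4%nat a / 24 * (b - a) ^ 4 * Rp 4 i ((x - a) / (b - a))) / (b - a) ^ i.

Lemma C50 : Binomial.C 5 0 = 1.
Proof. unfold Binomial.C. cbn [Nat.sub]. rewrite !fact_simpl, !mult_INR. simpl. field. Qed.
Lemma C61 : Binomial.C 6 1 = 6.
Proof. unfold Binomial.C. cbn [Nat.sub]. rewrite !fact_simpl, !mult_INR. simpl. field. Qed.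
Lemma C72 : Binomial.C 7 2 = 21.
Proof. unfold Binomial.C. cbn [Nat.sub]. rewrite !fact_simpl, !mult_INR. simpl. field. Qed.
Lemma C83 : Binomial.C 8 3 = 56.
Proof. unfold Binomial.C. cbn [Nat.sub]. rewrite !fact_simpl, !mult_INR. simpl. field. Qed.

Lemma H_eq phi D a b x : b <> a -> H 4 phi D a b x = HD phi D 0 a b x.
Proof.
  intros hab. unfold H, HD, bernstein.
  repeat (first [rewrite sum_n_m_zero by lia | rewrite sum_Sn_m by lia]); cbv beta.
  repeat (first [rewrite sum_n_m_zero by lia | rewrite sum_Sn_m by lia]); cbv beta.
  unfold plus, zero; simpl.
  rewrite C50, C61, C72, C83. field. intro h; apply hab; lra.
Qed.

Lemma Rp_der m i t : (i <= 3)%nat -> is_derive (Rp m i) t (Rp m (S i) t).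
Proof.
  intros Hi.
  destruct m as [|[|[|[|[|m]]]]]; destruct i as [|[|[|[|i]]]]; try lia; unfold Rp;
   auto_derive; auto; ring.
Qed.

Lemma Rp_at0 m i : (1 <= m <= 4)%nat -> (i <= 4)%nat ->
  Rp m i 0 = if Nat.eqb m i then INR (Factorial.fact m) else 0.
Proof.
  intros Hm Hi.
  destruct m as [|[|[|[|[|m]]]]]; destruct i as [|[|[|[|[|i]]]]]; try lia; unfold Rp; simpl; ring.
Qed.

Lemma Rp_at1 m i : (i <= 4)%nat -> Rp m i 1 = 0.
Proof.
  intros Hi.
  destruct m as [|[|[|[|[|m]]]]]; destruct i as [|[|[|[|[|i]]]]]; try lia; unfold Rp; simpl; ring.
Qed.

Lemma Rp_bound m i t : 0 <= t <= 1 -> Rabs (Rp m i t) <= 1000000.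
Proof.
  intros Ht.
  assert (P : forall j, 0 <= t ^ j <= 1).
  { intros j; split. apply pow_le; lra. rewrite <- (pow1 j). apply pow_incr; lra. }
  pose proof (P 0%nat); pose proof (P 1%nat); pose proof (P 2%nat); pose proof (P 3%nat);
  pose proof (P 4%nat); pose proof (P 5%nat); pose proof (P 6%nat); pose proof (P 7%nat);
  pose proof (P 8%nat); pose proof (P 9%nat).
  destruct m as [|[|[|[|[|m]]]]]; destruct i as [|[|[|[|[|i]]]]]; unfold Rp;
   try (rewrite Rabs_R0; lra); apply Rabs_le; split; lra.
Qed.

Lemma isd_plus (f g : R -> R) x df dg : is_derive f x df -> is_derive g x dg ->
  is_derive (fun y => f y + g y) x (df + dg).
Proof. intros. exact (is_derive_plus f g x df dg H H0). Qed.
Lemma isd_ext (f g : R -> R) x l : (forall t, f t = g t) -> is_derive f x l -> is_derive g x l.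
Proof. intros. exact (is_derive_ext f g x l H H0). Qed.
Lemma isd_const (a x : R) : is_derive (fun _ => a) x 0.
Proof. exact (is_derive_const a x). Qed.
Lemma isd_eq (f : R -> R) x l l' : is_derive f x l -> l = l' -> is_derive f x l'.
Proof. intros; subst; auto. Qed.

Lemma Rp_comp_der m i a s x : s <> 0 -> (i <= 3)%nat ->
  is_derive (fun y => Rp m i ((y - a) / s)) x (Rp m (S i) ((x - a) / s) / s).
Proof.
  intros hs Hi.
  pose proof (Rp_der m i ((x - a) / s) Hi) as H1.
  assert (H2 : is_derive (fun y => (y - a) / s) x (/ s)).
  { auto_derive; auto. field; auto. }
  pose proof (is_derive_comp _ _ x _ _ H1 H2) as H3.
  eapply isd_eq. exact H3. unfold scal; simpl; unfold mult; simpl. field; auto.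
Qed.

Lemma HD_der phi D i a b x : b <> a -> (i <= 3)%nat ->
  is_derive (HD phi D i a b) x (HD phi D (S i) a b x).
Proof.
  intros hab Hi. assert (hs : b - a <> 0) by (intro; apply hab; lra).
  set (s := b - a) in *.
  pose proof (Rp_comp_der 1 i a s x hs Hi) as T1.
  pose proof (Rp_comp_der 2 i a s x hs Hi) as T2.
  pose proof (Rp_comp_der 3 i a s x hs Hi) as T3.
  pose proof (Rp_comp_der 4 i a s x hs Hi) as T4.
  apply (is_derive_scal _ _ (D 1%nat a * s ^ 1 / s ^ i)) in T1.
  apply (is_derive_scal _ _ (D 2%nat a / 2 * s ^ 2 / s ^ i)) in T2.
  apply (is_derive_scal _ _ (D 3%nat a / 6 * s ^ 3 / s ^ i)) in T3.
  apply (is_derive_scal _ _ (D 4%nat a / 24 * s ^ 4 / s ^ i)) in T4.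
  pose proof (isd_plus _ _ _ _ _ (isd_const (match i with O => phi a | _ => 0 end) x)
     (isd_plus _ _ _ _ _ T1 (isd_plus _ _ _ _ _ T2 (isd_plus _ _ _ _ _ T3 T4)))) as T.
  match type of T with is_derive _ _ ?v => replace (HD phi D (S i) a b x) with v end.
  - eapply isd_ext. 2: exact T.
    intros t. unfold HD. fold s. field. apply pow_nonzero; auto.
  - unfold HD. fold s. simpl (match S i with O => _ | _ => _ end). simpl pow. field.
    split; auto. apply pow_nonzero; auto.
Qed.

Lemma HD_at_a phi D i a b : b <> a -> (i <= 4)%nat ->
  HD phi D i a b a = match i with O => phi a | _ => D i a end.
Proof.
  intros hab Hi. assert (hs : b - a <> 0) by (intro; apply hab; lra).
  unfold HD. replace ((a - a) / (b - a)) with 0 by (field; auto).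
  rewrite !Rp_at0 by lia.
  destruct i as [|[|[|[|[|i]]]]]; try lia; simpl; field; auto.
Qed.

Lemma HD_at_b phi D i a b : b <> a -> (i <= 4)%nat ->
  HD phi D i a b b = match i with O => phi a | _ => 0 end.
Proof.
  intros hab Hi. assert (hs : b - a <> 0) by (intro; apply hab; lra).
  unfold HD. replace ((b - a) / (b - a)) with 1 by (field; auto).
  rewrite !Rp_at1 by lia.
  destruct i as [|[|[|[|[|i]]]]]; try lia; simpl; field; auto.
Qed.

Definition LDer (f : R -> R) (x l : R) : Prop :=
  forall eps, 0 < eps -> exists d, 0 < d /\
    forall h, - d < h < 0 -> Rabs ((f (x + h) - f x) / h - l) < eps.
Definition RDer (f : R -> R) (x l : R) : Prop :=
  forall eps, 0 < eps -> exists d, 0 < d /\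
    forall h, 0 < h < d -> Rabs ((f (x + h) - f x) / h - l) < eps.

Lemma ball_R (x y e : R) : ball x e y <-> Rabs (y - x) < e.
Proof. unfold ball; simpl; unfold AbsRing_ball, abs, minus, plus, opp; simpl. tauto. Qed.

Lemma glue f x l : LDer f x l -> RDer f x l -> is_derive f x l.
Proof.
  intros HL HR. apply is_derive_Reals. intros eps heps.
  destruct (HL eps heps) as [d1 [hd1 H1]]. destruct (HR eps heps) as [d2 [hd2 H2]].
  assert (hd : 0 < Rmin d1 d2) by (apply Rmin_glb_lt; auto).
  exists (mkposreal _ hd). intros h hh0 hh. simpl in hh.
  pose proof (Rmin_l d1 d2); pose proof (Rmin_r d1 d2).
  destruct (Rlt_or_le h 0) as [hn|hp].
  - apply H1. apply Rabs_def2 in hh. lra.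
  - apply H2. apply Rabs_def2 in hh. lra.
Qed.

Lemma der_LR f x l : is_derive f x l -> LDer f x l /\ RDer f x l.
Proof.
  intros H. apply is_derive_Reals in H. split; intros eps heps;
  destruct (H eps heps) as [d hd]; exists d; split; try apply cond_pos;
  intros h hh; apply hd; try lra; apply Rabs_def1; lra.
Qed.

Lemma LDer_tr f f' x l d0 : 0 < d0 -> (forall y, x - d0 < y <= x -> f y = f' y) ->
  LDer f' x l -> LDer f x l.
Proof.
  intros hd0 E H eps heps. destruct (H eps heps) as [d [hd Hd]].
  exists (Rmin d d0). split. apply Rmin_glb_lt; auto.
  intros h hh. pose proof (Rmin_l d d0); pose proof (Rmin_r d d0).
  rewrite (E (x + h)) by lra. rewrite (E x) by lra. apply Hd. lra.
Qed.

Lemma RDer_tr f f' x l d0 : 0 < d0 -> (forall y, x <= y < x + d0 -> f y = f' y) ->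
  RDer f' x l -> RDer f x l.
Proof.
  intros hd0 E H eps heps. destruct (H eps heps) as [d [hd Hd]].
  exists (Rmin d d0). split. apply Rmin_glb_lt; auto.
  intros h hh. pose proof (Rmin_l d d0); pose proof (Rmin_r d d0).
  rewrite (E (x + h)) by lra. rewrite (E x) by lra. apply Hd. lra.
Qed.

Lemma LDer_const c x : LDer (fun _ => c) x 0.
Proof. intros eps heps. exists 1. split. lra. intros h hh.
  replace ((c - c) / h - 0) with 0 by (field; lra). rewrite Rabs_R0; lra. Qed.
Lemma RDer_const c x : RDer (fun _ => c) x 0.
Proof. intros eps heps. exists 1. split. lra. intros h hh.
  replace ((c - c) / h - 0) with 0 by (field; lra). rewrite Rabs_R0; lra. Qed.

Lemma I01_raw f x l : is_derive_I01 f x l -> forall eps, 0 < eps -> exists d, 0 < d /\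
  forall y, Rabs (y - x) < d -> I01 y -> y <> x -> Rabs ((f y - f x) / (y - x) - l) < eps.
Proof.
  intros H eps heps. unfold is_derive_I01, filterlim, filter_le, filtermap in H.
  specialize (H (ball l eps)). 
  assert (Hb : locally l (ball l eps)) by exact (locally_ball l (mkposreal _ heps)).
  specialize (H Hb). unfold within, locally in H. destruct H as [d Hd].
  exists d. split. apply cond_pos. intros y hy hI hne.
  specialize (Hd y). apply ball_R. apply Hd. apply ball_R. exact hy. split; auto.
Qed.

Lemma I01_L f x l : 0 < x <= 1 -> is_derive_I01 f x l -> LDer f x l.
Proof.
  intros hx H eps heps. destruct (I01_raw f x l H eps heps) as [d [hd Hd]].
  exists (Rmin d x). split. apply Rmin_glb_lt; lra.
  intros h hh. pose proof (Rmin_l d x); pose proof (Rmin_r d x).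
  replace h with ((x + h) - x) at 2 by ring. apply Hd.
  replace (x + h - x) with h by ring. apply Rabs_def1; lra.
  unfold I01; lra. lra.
Qed.

Lemma I01_R f x l : 0 < x < 1 -> is_derive_I01 f x l -> RDer f x l.
Proof.
  intros hx H eps heps. destruct (I01_raw f x l H eps heps) as [d [hd Hd]].
  exists (Rmin d (1 - x)). split. apply Rmin_glb_lt; lra.
  intros h hh. pose proof (Rmin_l d (1 - x)); pose proof (Rmin_r d (1 - x)).
  replace h with ((x + h) - x) at 2 by ring. apply Hd.
  replace (x + h - x) with h by ring. apply Rabs_def1; lra.
  unfold I01; lra. lra.
Qed.

Definition Dp (phi : R -> R) (D : nat -> R -> R) (i : nat) : R -> R :=
  match i with O => phi | _ => D i end.

Definition cA phi D Dl (i : nat) := match i with O => HD phi D 0 Dl (Dl / 2) (Dl / 2) | _ => 0 end.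
Definition cE phi D (i : nat) := match i with O => HD phi D 0 1 2 2 | _ => 0 end.

Definition g (phi : R -> R) (D : nat -> R -> R) (Dl : R) (i : nat) (x : R) : R :=
  if Rle_dec x (Dl / 2) then cA phi D Dl i
  else if Rlt_dec x Dl then HD phi D i Dl (Dl / 2) x
  else if Rle_dec x 1 then Dp phi D i x
  else if Rlt_dec x 2 then HD phi D i 1 2 x
  else cE phi D i.

Section G.
Variables (phi : R -> R) (D : nat -> R -> R) (Dl : R).
Hypothesis hDl : 0 < Dl < 1.

Lemma phibar_g x : phibar phi D Dl x = g phi D Dl 0 x.
Proof.
  unfold phibar, g, cA, cE. rewrite !H_eq by lra. reflexivity.
Qed.

Lemma gA i y : y <= Dl / 2 -> g phi D Dl i y = cA phi D Dl i.
Proof. intros. unfold g. destruct (Rle_dec y (Dl/2)); [auto|lra]. Qed.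

Lemma gB i y : Dl / 2 <= y <= Dl -> (i <= 4)%nat -> g phi D Dl i y = HD phi D i Dl (Dl / 2) y.
Proof.
  intros hy hi. unfold g. destruct (Rle_dec y (Dl/2)).
  - assert (y = Dl / 2) by lra. subst y. unfold cA.
    destruct i. reflexivity. rewrite HD_at_b by (lra || lia). reflexivity.
  - destruct (Rlt_dec y Dl). reflexivity.
    assert (y = Dl) by lra. subst y. destruct (Rle_dec Dl 1); [|lra].
    rewrite HD_at_a by (lra || lia). destruct i; reflexivity.
Qed.

Lemma gC i y : Dl <= y <= 1 -> g phi D Dl i y = Dp phi D i y.
Proof.
  intros hy. unfold g. destruct (Rle_dec y (Dl/2)); [lra|].
  destruct (Rlt_dec y Dl); [lra|]. destruct (Rle_dec y 1); [auto|lra].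
Qed.

Lemma gD i y : 1 <= y <= 2 -> (i <= 4)%nat -> g phi D Dl i y = HD phi D i 1 2 y.
Proof.
  intros hy hi. unfold g. destruct (Rle_dec y (Dl/2)); [lra|].
  destruct (Rlt_dec y Dl); [lra|]. destruct (Rle_dec y 1).
  - assert (y = 1) by lra. subst y. rewrite HD_at_a by (lra || lia). destruct i; reflexivity.
  - destruct (Rlt_dec y 2). reflexivity. assert (y = 2) by lra. subst y. unfold cE.
    destruct i. reflexivity. rewrite HD_at_b by (lra || lia). reflexivity.
Qed.

Lemma gE i y : 2 <= y -> g phi D Dl i y = cE phi D i.
Proof.
  intros hy. unfold g. destruct (Rle_dec y (Dl/2)); [lra|].
  destruct (Rlt_dec y Dl); [lra|]. destruct (Rle_dec y 1); [lra|].
  destruct (Rlt_dec y 2); [lra|]. reflexivity.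
Qed.

Hypothesis HDp : forall i x, (i <= 3)%nat -> I01 x -> is_derive_I01 (Dp phi D i) x (Dp phi D (S i) x).

Lemma g_der i x : (i <= 3)%nat -> is_derive (g phi D Dl i) x (g phi D Dl (S i) x).
Proof.
  intros hi. apply glue.
  - destruct (Rle_lt_dec x (Dl / 2)).
    + rewrite gA by lra. apply LDer_tr with (fun _ => cA phi D Dl i) 1. lra.
      intros y hy; apply gA; lra. apply LDer_const.
    + destruct (Rle_lt_dec x Dl).
      * rewrite gB by (lra || lia). apply LDer_tr with (HD phi D i Dl (Dl / 2)) (x - Dl / 2). lra.
        intros y hy; apply gB; (lra || lia). apply der_LR, HD_der; (lra || lia).
      * destruct (Rle_lt_dec x 1).
        -- rewrite gC by lra. apply LDer_tr with (Dp phi D i) (x - Dl). lra.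
           intros y hy; apply gC; lra. apply I01_L. lra. apply HDp; auto. unfold I01; lra.
        -- destruct (Rle_lt_dec x 2).
           ++ rewrite gD by (lra || lia). apply LDer_tr with (HD phi D i 1 2) (x - 1). lra.
              intros y hy; apply gD; (lra || lia). apply der_LR, HD_der; (lra || lia).
           ++ rewrite gE by lra. apply LDer_tr with (fun _ => cE phi D i) (x - 2). lra.
              intros y hy; apply gE; lra. apply LDer_const.
  - destruct (Rlt_le_dec x (Dl / 2)).
    + rewrite gA by lra. apply RDer_tr with (fun _ => cA phi D Dl i) (Dl / 2 - x). lra.
      intros y hy; apply gA; lra. apply RDer_const.
    + destruct (Rlt_le_dec x Dl).
      * rewrite gB by (lra || lia). apply RDer_tr with (HD phi D i Dl (Dl / 2)) (Dl - x). lra.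
        intros y hy; apply gB; (lra || lia). apply der_LR, HD_der; (lra || lia).
      * destruct (Rlt_le_dec x 1).
        -- rewrite gC by lra. apply RDer_tr with (Dp phi D i) (1 - x). lra.
           intros y hy; apply gC; lra. apply I01_R. lra. apply HDp; auto. unfold I01; lra.
        -- destruct (Rlt_le_dec x 2).
           ++ rewrite gD by (lra || lia). apply RDer_tr with (HD phi D i 1 2) (2 - x). lra.
              intros y hy; apply gD; (lra || lia). apply der_LR, HD_der; (lra || lia).
           ++ rewrite gE by lra. apply RDer_tr with (fun _ => cE phi D i) 1. lra.
              intros y hy; apply gE; lra. apply RDer_const.
Qed.

End G.

Lemma exp_mono x y : x <= y -> exp x <= exp y.
Proof. intros h. destruct (Rle_lt_or_eq_dec _ _ h). left; apply exp_increasing; auto. subst; lra. Qed.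

Lemma rp_pos x a : 0 < Rpower x a.
Proof. unfold Rpower. apply exp_pos. Qed.

Lemma rp_split x a k : 0 < x -> Rpower x (a - INR k) = Rpower x a / x ^ k.
Proof.
  intros hx. unfold Rminus. rewrite Rpower_plus, Rpower_Ropp, Rpower_pow by auto.
  unfold Rdiv. reflexivity.
Qed.

Lemma rp_dec x y a : 0 < x <= y -> a <= 0 -> Rpower y a <= Rpower x a.
Proof.
  intros hxy ha. unfold Rpower. apply exp_mono.
  pose proof (ln_le x y (proj1 hxy) (proj2 hxy)). nra.
Qed.

Lemma rp_inc x y a : 0 < x <= y -> 0 <= a -> Rpower x a <= Rpower y a.
Proof.
  intros hxy ha. unfold Rpower. apply exp_mono.
  pose proof (ln_le x y (proj1 hxy) (proj2 hxy)). nra.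
Qed.

Lemma rp_one a : Rpower 1 a = 1.
Proof. unfold Rpower. rewrite ln_1, Rmult_0_r. apply exp_0. Qed.

Definition Q (al : R) (k : nat) (x : R) := Rpower x al / x ^ k.

Lemma Q_pos al k x : 0 < x -> 0 < Q al k x.
Proof. intros. unfold Q. apply Rdiv_lt_0_compat. apply rp_pos. apply pow_lt; auto. Qed.

Lemma Q_dec al k x y : al < 1 -> (1 <= k)%nat -> 0 < x <= y -> Q al k y <= Q al k x.
Proof.
  intros hal hk hxy. unfold Q. rewrite <- !rp_split by lra. apply rp_dec; auto.
  apply le_INR in hk. simpl in hk. lra.
Qed.

Lemma Q_ge1 al k x : al < 1 -> (1 <= k)%nat -> 0 < x <= 1 -> 1 <= Q al k x.
Proof.
  intros. pose proof (Q_dec al k x 1 H H0 H1). unfold Q at 1 in H2.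
  rewrite rp_one, pow1 in H2. lra.
Qed.

Lemma mono_dec (v v' : R -> R) a b : a < b ->
  (forall t, a <= t <= b -> is_derive v t (v' t)) ->
  (forall t, a < t < b -> v' t <= 0) -> v b <= v a.
Proof.
  intros hab Hd Hn.
  destruct (MVT_cor2 v v' a b hab) as [xi [Hxi hxi]].
  - intros t ht. apply is_derive_Reals. apply Hd; auto.
  - pose proof (Hn xi hxi). nra.
Qed.

Lemma isd_ee (f g : R -> R) (x l l' : R) : (forall t, f t = g t) -> is_derive f x l -> l = l' -> is_derive g x l'.
Proof. intros E H e. rewrite <- e. exact (is_derive_ext f g x l E H). Qed.

Lemma rp_der e t : 0 < t -> is_derive (fun y => Rpower y e) t (e * Rpower t (e - 1)).
Proof. intros. apply is_derive_Reals. apply derivable_pt_lim_power; auto. Qed.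

Lemma step (U U' : R -> R) K c e x : 0 < x < 1 -> e < 0 -> 0 <= K -> 0 <= c ->
  (forall t, is_derive U t (U' t)) ->
  (forall t, x < t < 1 -> Rabs (U' t) <= K * Rpower t (e - 1) + c) ->
  Rabs (U x) <= K / (- e) * Rpower x e + c + Rabs (U 1).
Proof.
  intros hx he hK hc HU HB.
  set (F := fun t => K / (- e) * Rpower t e - c * t).
  assert (HF : forall t, 0 < t -> is_derive F t (- K * Rpower t (e - 1) - c)).
  { intros t ht. pose proof (is_derive_scal _ _ (K / (- e)) _ (rp_der e t ht)) as H1.
    assert (H2 : is_derive (fun y => - c * y) t (- c)) by (auto_derive; auto; ring).
    pose proof (isd_plus _ _ _ _ _ H1 H2) as H3.
    refine (isd_ee _ _ _ _ _ _ H3 _). intro t0; unfold F; cbv beta; ring. field; lra. }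
  assert (V1 : U 1 + F 1 <= U x + F x).
  { apply (mono_dec (fun t => U t + F t) (fun t => U' t + (- K * Rpower t (e - 1) - c)) x 1).
    lra. intros t ht. apply isd_plus; auto. apply HF; lra.
    intros t ht. pose proof (HB t ht). apply Rabs_le_between in H. lra. }
  assert (V2 : - (U 1 - F 1) <= - (U x - F x)).
  { apply (mono_dec (fun t => - (U t - F t)) (fun t => - (U' t - (- K * Rpower t (e - 1) - c))) x 1).
    lra. intros t ht.
    pose proof (is_derive_scal _ _ (-1) _ (isd_plus _ _ _ _ _ (HU t) (is_derive_scal _ _ (-1) _ (HF t ltac:(lra))))) as H.
    refine (isd_ee _ _ _ _ _ _ H _). intro t0; cbv beta; ring. ring.
    intros t ht. pose proof (HB t ht). apply Rabs_le_between in H. lra. }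
  unfold F in V1, V2. rewrite rp_one in V1, V2.
  pose proof (rp_pos x e).
  assert (K / - e * Rpower x e >= 0).
  { apply Rle_ge. apply Rmult_le_pos. apply Rdiv_le_0_compat; lra. lra. }
  assert (0 <= K / - e) by (apply Rdiv_le_0_compat; lra).
  apply Rabs_le_between. pose proof (Rabs_le_between (U 1) (Rabs (U 1))) as [A _].
  specialize (A (Rle_refl _)). nra.
Qed.

Lemma HDp_of_C4 phi D : C4_derivs_I01 phi D ->
  forall i x, (i <= 3)%nat -> I01 x -> is_derive_I01 (Dp phi D i) x (Dp phi D (S i) x).
Proof.
  intros [H1 [H2 _]] i x hi hx.
  destruct i as [|i]. simpl. apply H1; auto.
  simpl Dp. apply H2; auto. lia.
Qed.

Section DB.
Variables (phi : R -> R) (D : nat -> R -> R) (al : R).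
Hypothesis hal : 0 < al < 1.
Hypothesis HDp : forall i x, (i <= 3)%nat -> I01 x -> is_derive_I01 (Dp phi D i) x (Dp phi D (S i) x).

Lemma down k K c : (1 <= k <= 3)%nat -> 0 <= K -> 0 <= c ->
  (forall t, 0 < t <= 1 -> Rabs (Dp phi D (S k) t) <= K * Rpower t (al - INR (S k)) + c) ->
  forall x, 0 < x <= 1 ->
    Rabs (Dp phi D k x) <= K / (INR k - al) * Rpower x (al - INR k) + c + Rabs (Dp phi D k 1).
Proof.
  intros hk hK hc HB x hx.
  assert (hk' : 1 <= INR k) by (apply (le_INR 1 k); lia).
  assert (0 <= K / (INR k - al) * Rpower x (al - INR k)).
  { apply Rmult_le_pos. apply Rdiv_le_0_compat; lra. left; apply rp_pos. }
  destruct (Req_dec x 1) as [e1|e1].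
  - subst x. lra.
  - pose proof (step (g phi D x k) (g phi D x (S k)) K c (al - INR k) x) as S.
    assert (hx' : 0 < x < 1) by lra.
    rewrite (gC phi D x hx' k x) in S by lra. rewrite (gC phi D x hx' k 1) in S by lra.
    replace (- (al - INR k)) with (INR k - al) in S by ring.
    apply S; clear S; try lra.
    + intros t. apply (g_der phi D x hx' HDp). lia.
    + intros t ht. rewrite (gC phi D x hx') by lra. rewrite S_INR in HB.
      replace (al - INR k - 1) with (al - (INR k + 1)) by ring. apply HB; lra.
Qed.

Hypothesis HD4 : exists K c, 0 <= K /\ 0 <= c /\
  forall t, 0 < t <= 1 -> Rabs (Dp phi D 4 t) <= K * Rpower t (al - INR 4) + c.

Lemma Dbounds : exists E, 0 < E /\ forall k x, (1 <= k <= 4)%nat -> 0 < x <= 1 ->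
  Rabs (Dp phi D k x) <= E * Q al k x.
Proof.
  destruct HD4 as [K4 [c4 [hK4 [hc4 B4]]]].
  assert (h3 : 0 < INR 3 - al) by (simpl; lra).
  assert (h2 : 0 < INR 2 - al) by (simpl; lra).
  assert (h1 : 0 < INR 1 - al) by (simpl; lra).
  set (K3 := K4 / (INR 3 - al)). set (c3 := c4 + Rabs (Dp phi D 3 1)).
  assert (B3 : forall t, 0 < t <= 1 -> Rabs (Dp phi D 3 t) <= K3 * Rpower t (al - INR 3) + c3) by (intros t ht; pose proof (down 3 K4 c4 ltac:(lia) hK4 hc4 B4 t ht); unfold K3, c3; lra).
  assert (hK3 : 0 <= K3) by (apply Rdiv_le_0_compat; lra).
  assert (hc3 : 0 <= c3) by (pose proof (Rabs_pos (Dp phi D 3 1)); unfold c3; lra).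
  set (K2 := K3 / (INR 2 - al)). set (c2 := c3 + Rabs (Dp phi D 2 1)).
  assert (B2 : forall t, 0 < t <= 1 -> Rabs (Dp phi D 2 t) <= K2 * Rpower t (al - INR 2) + c2) by (intros t ht; pose proof (down 2 K3 c3 ltac:(lia) hK3 hc3 B3 t ht); unfold K2, c2; lra).
  assert (hK2 : 0 <= K2) by (apply Rdiv_le_0_compat; lra).
  assert (hc2 : 0 <= c2) by (pose proof (Rabs_pos (Dp phi D 2 1)); unfold c2; lra).
  set (K1 := K2 / (INR 1 - al)). set (c1 := c2 + Rabs (Dp phi D 1 1)).
  assert (B1 : forall t, 0 < t <= 1 -> Rabs (Dp phi D 1 t) <= K1 * Rpower t (al - INR 1) + c1) by (intros t ht; pose proof (down 1 K2 c2 ltac:(lia) hK2 hc2 B2 t ht); unfold K1, c1; lra).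
  assert (hK1 : 0 <= K1) by (apply Rdiv_le_0_compat; lra).
  assert (hc1 : 0 <= c1) by (pose proof (Rabs_pos (Dp phi D 1 1)); unfold c1; lra).
  exists (K1 + c1 + K2 + c2 + K3 + c3 + K4 + c4 + 1). split. lra.
  intros k x hk hx.
  assert (HQ : forall K c, 0 <= K -> 0 <= c -> (1 <= k)%nat ->
    K * Rpower x (al - INR k) + c <= (K + c) * Q al k x).
  { intros K c hK hc hk1. rewrite rp_split by lra. fold (Q al k x).
    pose proof (Q_ge1 al k x ltac:(lra) hk1 hx). nra. }
  assert (0 < Q al k x) by (apply Q_pos; lra).
  destruct k as [|[|[|[|[|k]]]]]; try lia.
  - apply Rle_trans with ((K1 + c1) * Q al 1 x). eapply Rle_trans. apply B1; auto. apply HQ; auto. apply Rmult_le_compat_r; lra.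
  - apply Rle_trans with ((K2 + c2) * Q al 2 x). eapply Rle_trans. apply B2; auto. apply HQ; auto. apply Rmult_le_compat_r; lra.
  - apply Rle_trans with ((K3 + c3) * Q al 3 x). eapply Rle_trans. apply B3; auto. apply HQ; auto. apply Rmult_le_compat_r; lra.
  - apply Rle_trans with ((K4 + c4) * Q al 4 x). eapply Rle_trans. apply B4; auto. apply HQ; auto. apply Rmult_le_compat_r; lra.
Qed.

End DB.

Lemma tb (d q s r B : R) (m : nat) : 0 < q <= 1 -> Rabs r <= B ->
  Rabs (d * q * s ^ m * r) <= Rabs d * Rabs s ^ m * B.
Proof.
  intros hq hr. rewrite !Rabs_mult, <- RPow_abs. rewrite (Rabs_right q) by lra.
  pose proof (Rabs_pos d); pose proof (pow_le (Rabs s) m (Rabs_pos s)).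
  pose proof (Rabs_pos r).
  apply Rmult_le_compat; try nra. apply Rmult_le_pos; [apply Rmult_le_pos|]; lra.
  rewrite (Rmult_comm (Rabs d) q). rewrite Rmult_assoc. pattern (Rabs d * Rabs s ^ m) at 2. rewrite <- Rmult_1_l. apply Rmult_le_compat_r. nra. lra.
Qed.

Lemma div_le1 a b : 0 < b -> a <= b -> a / b <= 1.
Proof. intros. apply (Rmult_le_reg_r b); auto. unfold Rdiv. rewrite Rmult_assoc, Rinv_l, Rmult_1_r, Rmult_1_l; lra. Qed.

Definition B0 := 1000000.

Lemma HD_bound phi D i a b x : b <> a -> (1 <= i)%nat -> 0 <= (x - a) / (b - a) <= 1 ->
  Rabs (HD phi D i a b x) <=
  B0 * (Rabs (D 1%nat a) * Rabs (b - a) ^ 1 + Rabs (D 2%nat a) * Rabs (b - a) ^ 2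
       + Rabs (D 3%nat a) * Rabs (b - a) ^ 3 + Rabs (D 4%nat a) * Rabs (b - a) ^ 4)
    / Rabs (b - a) ^ i.
Proof.
  intros hab hi ht. assert (hs : b - a <> 0) by (intro; apply hab; lra).
  unfold HD. destruct i as [|i]; [lia|]. rewrite Rplus_0_l.
  set (t := (x - a) / (b - a)) in *. set (s := b - a) in *.
  rewrite Rabs_div by (apply pow_nonzero; auto). rewrite <- RPow_abs.
  assert (hsp : 0 < Rabs s ^ S i) by (apply pow_lt; apply Rabs_pos_lt; auto).
  unfold Rdiv. apply Rmult_le_compat_r. left; apply Rinv_0_lt_compat; auto.
  pose proof (Rp_bound 1 (S i) t ht); pose proof (Rp_bound 2 (S i) t ht);
  pose proof (Rp_bound 3 (S i) t ht); pose proof (Rp_bound 4 (S i) t ht).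
  unfold B0.
  pose proof (tb (D 1%nat a) 1 s (Rp 1 (S i) t) 1000000 1 ltac:(lra) H).
  pose proof (tb (D 2%nat a) (/2) s (Rp 2 (S i) t) 1000000 2 ltac:(lra) H0).
  pose proof (tb (D 3%nat a) (/6) s (Rp 3 (S i) t) 1000000 3 ltac:(lra) H1).
  pose proof (tb (D 4%nat a) (/24) s (Rp 4 (S i) t) 1000000 4 ltac:(lra) H2).
  rewrite Rmult_1_r in H3.
  set (u1 := D 1%nat a * s ^ 1 * Rp 1 (S i) t) in *.
  set (u2 := D 2%nat a * / 2 * s ^ 2 * Rp 2 (S i) t) in *.
  set (u3 := D 3%nat a * / 6 * s ^ 3 * Rp 3 (S i) t) in *.
  set (u4 := D 4%nat a * / 24 * s ^ 4 * Rp 4 (S i) t) in *.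
  pose proof (Rabs_triang (u1 + u2 + u3) u4). pose proof (Rabs_triang (u1 + u2) u3).
  pose proof (Rabs_triang u1 u2). lra.
Qed.

Section GB.
Variables (phi : R -> R) (D : nat -> R -> R) (al Dl E : R).
Hypothesis hal : 0 < al < 1.
Hypothesis hDl : 0 < Dl < 1.
Hypothesis hE : 0 < E.
Hypothesis DB : forall k x, (1 <= k <= 4)%nat -> 0 < x <= 1 -> Rabs (Dp phi D k x) <= E * Q al k x.

Definition M1 := Rabs (D 1%nat 1) + Rabs (D 2%nat 1) + Rabs (D 3%nat 1) + Rabs (D 4%nat 1).

Lemma M1_pos : 0 <= M1.
Proof. unfold M1. pose proof (Rabs_pos (D 1%nat 1)); pose proof (Rabs_pos (D 2%nat 1));
  pose proof (Rabs_pos (D 3%nat 1)); pose proof (Rabs_pos (D 4%nat 1)). lra. Qed.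

Lemma Dm_half m : (1 <= m <= 4)%nat -> Rabs (D m Dl) * Rabs (Dl / 2 - Dl) ^ m <= E * Rpower Dl al.
Proof.
  intros hm. replace (Rabs (Dl / 2 - Dl)) with (Dl / 2) by (rewrite Rabs_left by lra; field).
  pose proof (DB m Dl hm ltac:(lra)) as H.
  replace (Dp phi D m) with (D m) in H by (destruct m; [lia|reflexivity]).
  unfold Q in H.
  assert (h1 : 0 <= (Dl / 2) ^ m) by (apply pow_le; lra).
  assert (h2 : (Dl / 2) ^ m <= Dl ^ m) by (apply pow_incr; lra).
  assert (h3 : 0 < Dl ^ m) by (apply pow_lt; lra).
  pose proof (rp_pos Dl al).
  apply Rle_trans with (E * (Rpower Dl al / Dl ^ m) * (Dl / 2) ^ m).
  apply Rmult_le_compat_r; auto.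
  apply Rle_trans with (E * (Rpower Dl al / Dl ^ m) * Dl ^ m).
  apply Rmult_le_compat_l; auto. apply Rmult_le_pos. lra. apply Rdiv_le_0_compat; lra.
  right. field. lra.
Qed.

Lemma gB_bnd i x : (1 <= i <= 4)%nat -> Dl / 2 <= x <= Dl ->
  Rabs (g phi D Dl i x) <= 64 * B0 * E * Q al i Dl.
Proof.
  intros hi hx. rewrite gB by (lra || lia).
  eapply Rle_trans. apply HD_bound. lra. lia.
  replace ((x - Dl) / (Dl / 2 - Dl)) with ((Dl - x) / (Dl / 2)) by (field; lra).
  split. apply Rdiv_le_0_compat; lra. apply div_le1; lra.
  pose proof (Dm_half 1 ltac:(lia)); pose proof (Dm_half 2 ltac:(lia));
  pose proof (Dm_half 3 ltac:(lia)); pose proof (Dm_half 4 ltac:(lia)).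
  set (X := Rabs (D 1%nat Dl) * Rabs (Dl / 2 - Dl) ^ 1 + Rabs (D 2%nat Dl) * Rabs (Dl / 2 - Dl) ^ 2 +
     Rabs (D 3%nat Dl) * Rabs (Dl / 2 - Dl) ^ 3 + Rabs (D 4%nat Dl) * Rabs (Dl / 2 - Dl) ^ 4).
  assert (hX : X <= 4 * (E * Rpower Dl al)) by (unfold X; lra).
  assert (hX0 : 0 <= X).
  { unfold X. pose proof (Rabs_pos (D 1%nat Dl)); pose proof (Rabs_pos (D 2%nat Dl));
    pose proof (Rabs_pos (D 3%nat Dl)); pose proof (Rabs_pos (D 4%nat Dl)).
    assert (forall m, 0 <= Rabs (Dl / 2 - Dl) ^ m) by (intros; apply pow_le; apply Rabs_pos).
    pose proof (H7 1%nat); pose proof (H7 2%nat); pose proof (H7 3%nat); pose proof (H7 4%nat). nra. }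
  clearbody X.
  replace (Rabs (Dl / 2 - Dl)) with (Dl * / 2) by (rewrite Rabs_left by lra; field).
  rewrite Rpow_mult_distr, pow_inv.
  assert (hp : 0 < Dl ^ i) by (apply pow_lt; lra).
  assert (h2 : 1 <= 2 ^ i <= 16).
  { split. apply pow_R1_Rle; lra. replace 16 with (2 ^ 4) by ring. apply Rle_pow; lra || lia. }
  unfold Q. pose proof (rp_pos Dl al).
  replace (B0 * X / (Dl ^ i * / 2 ^ i)) with (B0 * X * 2 ^ i / Dl ^ i) by (field; lra).
  replace (64 * B0 * E * (Rpower Dl al / Dl ^ i)) with (64 * B0 * E * Rpower Dl al / Dl ^ i) by (field; lra).
  unfold Rdiv. apply Rmult_le_compat_r. left; apply Rinv_0_lt_compat; auto.
  unfold B0. nra.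
Qed.
Lemma gD_bnd i x : (1 <= i <= 4)%nat -> 1 <= x <= 2 -> Rabs (g phi D Dl i x) <= B0 * M1.
Proof.
  intros hi hx. rewrite gD by (lra || lia).
  eapply Rle_trans. apply HD_bound. lra. lia.
  replace ((x - 1) / (2 - 1)) with (x - 1) by field. lra.
  replace (Rabs (2 - 1)) with 1 by (rewrite Rabs_right; lra).
  rewrite !pow1. unfold M1. right; field.
Qed.

Lemma gC_bnd i x : (1 <= i <= 4)%nat -> Dl <= x <= 1 -> Rabs (g phi D Dl i x) <= E * Q al i x.
Proof. intros hi hx. rewrite gC by lra. apply DB; auto. lra. Qed.

Lemma gA0 i x : (1 <= i)%nat -> x <= Dl / 2 -> g phi D Dl i x = 0.
Proof. intros hi hx. rewrite gA by lra. unfold cA. destruct i; [lia|reflexivity]. Qed.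

Lemma gE0 i x : (1 <= i)%nat -> 2 <= x -> g phi D Dl i x = 0.
Proof. intros hi hx. rewrite gE by lra. unfold cE. destruct i; [lia|reflexivity]. Qed.

Lemma BF1 i x : (1 <= i <= 4)%nat -> x <= 1 -> Rabs (g phi D Dl i x) <= (64 * B0 * E + E) * Q al i Dl.
Proof.
  intros hi hx. assert (0 < Q al i Dl) by (apply Q_pos; lra). unfold B0 in *.
  destruct (Rle_lt_dec x (Dl / 2)).
  - rewrite gA0 by (lra || lia). rewrite Rabs_R0. nra.
  - destruct (Rle_lt_dec x Dl).
    + eapply Rle_trans. apply gB_bnd; (lra || lia). unfold B0; nra.
    + eapply Rle_trans. apply gC_bnd; (lra || lia).
      assert (Q al i x <= Q al i Dl) by (apply Q_dec; (lra || lia)). nra.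
Qed.

Lemma Q_half y : 0 < y -> Q al 4 (y / 2) <= 16 * Q al 4 y.
Proof.
  intros hy. unfold Q. pose proof (rp_inc (y/2) y al ltac:(lra) ltac:(lra)).
  replace ((y / 2) ^ 4) with (y ^ 4 / 16) by field.
  assert (0 < y ^ 4) by (apply pow_lt; lra).
  replace (Rpower (y / 2) al / (y ^ 4 / 16)) with (16 * (Rpower (y / 2) al / y ^ 4)) by (field; lra).
  apply Rmult_le_compat_l. lra. unfold Rdiv. apply Rmult_le_compat_r; auto.
  left; apply Rinv_0_lt_compat; auto.
Qed.

Lemma BF4 p x : Dl < p <= 1 -> p / 2 <= x ->
  Rabs (g phi D Dl 4 x) <= (1024 * B0 * E + 16 * E + B0 * M1) * Q al 4 p.
Proof.
  intros hp hx. assert (hQ : 0 < Q al 4 p) by (apply Q_pos; lra).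
  pose proof (Q_half p ltac:(lra)) as Hh. pose proof M1_pos. unfold B0 in *.
  assert (0 <= 1024 * 1000000 * E * Q al 4 p) by nra.
  assert (0 <= 16 * E * Q al 4 p) by nra.
  assert (0 <= 1000000 * M1 * Q al 4 p) by nra.
  destruct (Rle_lt_dec x (Dl / 2)).
  - rewrite gA0 by (lra || lia). rewrite Rabs_R0. nra.
  - destruct (Rle_lt_dec x Dl).
    + eapply Rle_trans. apply gB_bnd; (lra || lia).
      assert (Q al 4 Dl <= Q al 4 (p / 2)) by (apply Q_dec; (lra || lia)). unfold B0; nra.
    + destruct (Rle_lt_dec x 1).
      * eapply Rle_trans. apply gC_bnd; (lra || lia).
        assert (Q al 4 x <= Q al 4 (p / 2)) by (apply Q_dec; (lra || lia)). nra.
      * destruct (Rle_lt_dec x 2).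
        -- eapply Rle_trans. apply gD_bnd; (lra || lia).
           pose proof (Q_ge1 al 4 p ltac:(lra) ltac:(lia) ltac:(lra)). unfold B0; nra.
        -- rewrite gE0 by (lra || lia). rewrite Rabs_R0. nra.
Qed.

End GB.

Lemma tstep (h h' : R -> R) p X B k : 0 <= B -> (forall t, is_derive h t (h' t)) -> h p = 0 ->
  (forall t, Rmin p X <= t <= Rmax p X -> Rabs (h' t) <= B * Rabs (t - p) ^ k) ->
  forall t, Rmin p X <= t <= Rmax p X -> Rabs (h t) <= B * Rabs (t - p) ^ (S k).
Proof.
  intros hB Hd h0 Hb t ht.
  assert (Hd' : forall a b, forall c, a <= c <= b -> derivable_pt_lim h c (h' c))
    by (intros; apply is_derive_Reals; auto).
  pose proof (Rmin_l p X); pose proof (Rmax_l p X).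
  destruct (Rtotal_order t p) as [hlt|[heq|hgt]].
  - destruct (MVT_cor2 h h' t p hlt (Hd' t p)) as [xi [E hxi]].
    assert (hI : Rmin p X <= xi <= Rmax p X) by lra.
    pose proof (Hb xi hI) as Hx.
    rewrite h0 in E. replace (h t) with (- (h' xi * (p - t))) by lra.
    rewrite Rabs_Ropp, Rabs_mult. simpl pow.
    rewrite (Rabs_left (t - p)) in * by lra. rewrite (Rabs_left (xi - p)) in Hx by lra.
    rewrite (Rabs_right (p - t)) by lra.
    assert (0 <= - (xi - p) <= - (t - p)) by lra.
    assert ((- (xi - p)) ^ k <= (- (t - p)) ^ k) by (apply pow_incr; lra).
    pose proof (pow_le (- (xi - p)) k ltac:(lra)).
    pose proof (Rabs_pos (h' xi)).
    apply Rle_trans with (B * (- (xi - p)) ^ k * (p - t)). apply Rmult_le_compat_r; lra.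
    replace (B * (- (t - p) * (- (t - p)) ^ k)) with (B * (- (t - p)) ^ k * (p - t)) by ring.
    apply Rmult_le_compat_r. lra. apply Rmult_le_compat_l; lra.
  - subst t. rewrite h0, Rabs_R0. replace (p - p) with 0 by ring. rewrite Rabs_R0. simpl. lra.
  - destruct (MVT_cor2 h h' p t hgt (Hd' p t)) as [xi [E hxi]].
    assert (hI : Rmin p X <= xi <= Rmax p X) by lra.
    pose proof (Hb xi hI) as Hx.
    rewrite h0 in E. replace (h t) with (h' xi * (t - p)) by lra.
    rewrite Rabs_mult. simpl pow.
    rewrite (Rabs_right (t - p)) in * by lra. rewrite (Rabs_right (xi - p)) in Hx by lra.
    assert (0 <= (xi - p) <= (t - p)) by lra.
    assert ((xi - p) ^ k <= (t - p) ^ k) by (apply pow_incr; lra).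
    pose proof (pow_le (xi - p) k ltac:(lra)).
    pose proof (Rabs_pos (h' xi)).
    apply Rle_trans with (B * (xi - p) ^ k * (t - p)). apply Rmult_le_compat_r; lra.
    replace (B * ((t - p) * (t - p) ^ k)) with (B * (t - p) ^ k * (t - p)) by ring.
    apply Rmult_le_compat_r. lra. apply Rmult_le_compat_l; lra.
Qed.

Lemma taylor (G : nat -> R -> R) p X B : 0 <= B ->
  (forall i t, (i <= 3)%nat -> is_derive (G i) t (G (S i) t)) ->
  (forall t, Rmin p X <= t <= Rmax p X -> Rabs (G 4%nat t) <= B) ->
  Rabs (G 0%nat X - (G 0%nat p + G 1%nat p * (X - p) + G 2%nat p * (X - p) ^ 2 / 2
        + G 3%nat p * (X - p) ^ 3 / 6)) <= B * (X - p) ^ 4 /\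
  Rabs (G 2%nat X - G 2%nat p - G 3%nat p * (X - p)) <= B * (X - p) ^ 2.
Proof.
  intros hB Hd Hb.
  set (e3 := fun t => G 3%nat t - G 3%nat p).
  set (e2 := fun t => G 2%nat t - G 2%nat p - G 3%nat p * (t - p)).
  set (e1 := fun t => G 1%nat t - G 1%nat p - G 2%nat p * (t - p) - G 3%nat p * (t - p) ^ 2 / 2).
  set (e0 := fun t => G 0%nat t - G 0%nat p - G 1%nat p * (t - p) - G 2%nat p * (t - p) ^ 2 / 2
                     - G 3%nat p * (t - p) ^ 3 / 6).
  assert (D3 : forall t, is_derive e3 t (G 4%nat t)).
  { intros t. refine (isd_ee _ _ _ _ _ _ (isd_plus _ _ _ _ _ (Hd 3%nat t ltac:(lia)) (isd_const (- G 3%nat p) t)) _).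
    intro; unfold e3; cbv beta; ring. ring. }
  assert (D2 : forall t, is_derive e2 t (e3 t)).
  { intros t. assert (P : is_derive (fun t => - G 2%nat p - G 3%nat p * (t - p)) t (- G 3%nat p))
      by (auto_derive; auto; ring).
    refine (isd_ee _ _ _ _ _ _ (isd_plus _ _ _ _ _ (Hd 2%nat t ltac:(lia)) P) _).
    intro; unfold e2; cbv beta; ring. unfold e3; ring. }
  assert (D1 : forall t, is_derive e1 t (e2 t)).
  { intros t. assert (P : is_derive (fun t => - G 1%nat p - G 2%nat p * (t - p) - G 3%nat p * (t - p) ^ 2 / 2) t
       (- G 2%nat p - G 3%nat p * (t - p))) by (auto_derive; auto; field).
    refine (isd_ee _ _ _ _ _ _ (isd_plus _ _ _ _ _ (Hd 1%nat t ltac:(lia)) P) _).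
    intro; unfold e1; cbv beta; ring. unfold e2; ring. }
  assert (D0 : forall t, is_derive e0 t (e1 t)).
  { intros t. assert (P : is_derive (fun t => - G 0%nat p - G 1%nat p * (t - p) - G 2%nat p * (t - p) ^ 2 / 2
                     - G 3%nat p * (t - p) ^ 3 / 6) t
       (- G 1%nat p - G 2%nat p * (t - p) - G 3%nat p * (t - p) ^ 2 / 2)) by (auto_derive; auto; field).
    refine (isd_ee _ _ _ _ _ _ (isd_plus _ _ _ _ _ (Hd 0%nat t ltac:(lia)) P) _).
    intro; unfold e0; cbv beta; ring. unfold e1; ring. }
  assert (B4 : forall t, Rmin p X <= t <= Rmax p X -> Rabs (G 4%nat t) <= B * Rabs (t - p) ^ 0).
  { intros; simpl; rewrite Rmult_1_r; auto. }
  assert (B3 := tstep e3 (G 4%nat) p X B 0 hB D3 ltac:(unfold e3; cbv beta; ring) B4).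
  assert (B2 := tstep e2 e3 p X B 1 hB D2 ltac:(unfold e2; cbv beta; ring) B3).
  assert (z1 : e1 p = 0) by (unfold e1; cbv beta; replace (p - p) with 0 by ring; field).
  assert (z0 : e0 p = 0) by (unfold e0; cbv beta; replace (p - p) with 0 by ring; field).
  assert (B1 := tstep e1 e2 p X B 2 hB D1 z1 B2).
  assert (B0 := tstep e0 e1 p X B 3 hB D0 z0 B1).
  assert (hX : Rmin p X <= X <= Rmax p X) by (split; [apply Rmin_r|apply Rmax_r]).
  split.
  - specialize (B0 X hX). unfold e0 in B0.
    replace (Rabs (X - p) ^ 4) with ((X - p) ^ 4) in B0 by (rewrite RPow_abs; rewrite Rabs_right; [reflexivity| apply Rle_ge; replace 4%nat with (2*2)%nat by lia; rewrite pow_mult; apply pow2_ge_0]).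
    replace (G 0%nat X - (G 0%nat p + G 1%nat p * (X - p) + G 2%nat p * (X - p) ^ 2 / 2 + G 3%nat p * (X - p) ^ 3 / 6))
      with (G 0%nat X - G 0%nat p - G 1%nat p * (X - p) - G 2%nat p * (X - p) ^ 2 / 2 - G 3%nat p * (X - p) ^ 3 / 6) by ring.
    exact B0.
  - specialize (B2 X hX). unfold e2 in B2.
    replace (Rabs (X - p) ^ 2) with ((X - p) ^ 2) in B2 by (rewrite RPow_abs; rewrite Rabs_right; [reflexivity| apply Rle_ge; apply pow2_ge_0]).
    exact B2.
Qed.

Lemma pointwise (G : nat -> R -> R) (p N X Bq a1 a2 b c : R) :
  (forall i t, (i <= 3)%nat -> is_derive (G i) t (G (S i) t)) ->
  0 < p -> 0 < N -> 0 <= X -> 0 <= Bq -> 0 <= a1 -> 0 <= a2 -> 0 <= b -> 0 <= c ->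
  (forall t, p / 2 <= t -> Rabs (G 4%nat t) <= Bq) ->
  (forall t, t <= p -> Rabs (G 1%nat t) <= a1) ->
  (forall t, t <= p -> Rabs (G 2%nat t) <= a2) ->
  Rabs (G 1%nat p) * p <= b -> Rabs (G 2%nat p) * p ^ 2 <= b -> Rabs (G 3%nat p) * p ^ 3 <= b ->
  Rabs (G 2%nat p) <= c -> Rabs (G 3%nat p) * p <= c ->
  Rabs ((G 0%nat X - (G 0%nat p + G 1%nat p * (X - p) + G 2%nat p * (X - p) ^ 2 / 2
        + G 3%nat p * (X - p) ^ 3 / 6))
        - X / (2 * N) * (G 2%nat X - G 2%nat p - G 3%nat p * (X - p)))
  <= (Bq + 16 * (a1 * p + 3 * b) / p ^ 4 + 4 * (a2 + 2 * c) / (N * p ^ 3)) * (X - p) ^ 4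
     + Bq / (2 * N) * X * (X - p) ^ 2.
Proof.
  intros Hd hp hN hX hBq ha1 ha2 hb hc HB4 HB1 HB2 Hb1 Hb2 Hb3 Hc2 Hc3.
  set (R4 := G 0%nat X - (G 0%nat p + G 1%nat p * (X - p) + G 2%nat p * (X - p) ^ 2 / 2
        + G 3%nat p * (X - p) ^ 3 / 6)).
  set (R2 := G 2%nat X - G 2%nat p - G 3%nat p * (X - p)).
  assert (hY4 : 0 <= (X - p) ^ 4) by (replace 4%nat with (2*2)%nat by lia; rewrite pow_mult; apply pow2_ge_0).
  assert (hY2 : 0 <= (X - p) ^ 2) by apply pow2_ge_0.
  assert (T1 : 0 <= 16 * (a1 * p + 3 * b) / p ^ 4 * (X - p) ^ 4).
  { apply Rmult_le_pos; auto. apply Rdiv_le_0_compat. nra. apply pow_lt; lra. }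
  assert (T2 : 0 <= 4 * (a2 + 2 * c) / (N * p ^ 3) * (X - p) ^ 4).
  { apply Rmult_le_pos; auto. apply Rdiv_le_0_compat. nra. apply Rmult_lt_0_compat; auto; apply pow_lt; lra. }
  assert (T3 : 0 <= Bq * (X - p) ^ 4) by nra.
  assert (T4 : 0 <= Bq / (2 * N) * X * (X - p) ^ 2).
  { apply Rmult_le_pos; auto. apply Rmult_le_pos; auto. apply Rdiv_le_0_compat; lra. }
  pose proof (Rabs_triang R4 (- (X / (2 * N) * R2))) as Tri. rewrite Rabs_Ropp, Rabs_mult in Tri.
  rewrite (Rabs_right (X / (2 * N))) in Tri by (apply Rle_ge, Rdiv_le_0_compat; lra).
  unfold Rminus at 1. eapply Rle_trans. exact Tri.
  destruct (Rle_lt_dec (p / 2) X) as [hfar|hnear].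
  - destruct (taylor G p X Bq hBq Hd) as [A1 A2].
    { intros t ht. apply HB4. pose proof (Rmin_glb p X (p/2) ltac:(lra) hfar). lra. }
    fold R4 in A1. fold R2 in A2.
    assert (X / (2 * N) * Rabs R2 <= Bq / (2 * N) * X * (X - p) ^ 2).
    { replace (Bq / (2 * N) * X * (X - p) ^ 2) with (X / (2 * N) * (Bq * (X - p) ^ 2)) by (field; lra).
      apply Rmult_le_compat_l; auto. apply Rdiv_le_0_compat; lra. }
    nra.
  -
    assert (hY : 0 <= - (X - p) <= p) by lra.
    assert (hone : 1 <= 16 * (X - p) ^ 4 / p ^ 4).
    { assert (p / 2 <= - (X - p)) by lra.
      assert ((p / 2) ^ 4 <= (- (X - p)) ^ 4) by (apply pow_incr; lra).
      replace ((- (X - p)) ^ 4) with ((X - p) ^ 4) in H0 by ring.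
      assert (0 < p ^ 4) by (apply pow_lt; lra).
      replace (16 * (X - p) ^ 4 / p ^ 4) with ((X - p) ^ 4 / (p / 2) ^ 4) by (field; lra).
      assert (0 < (p / 2) ^ 4) by (apply pow_lt; lra).
      apply (Rmult_le_reg_r ((p/2)^4)); auto. unfold Rdiv. rewrite Rmult_assoc, Rinv_l, Rmult_1_r, Rmult_1_l; lra. }
    destruct (MVT_cor2 (G 0%nat) (G 1%nat) X p ltac:(lra)) as [xi [E hxi]].
    { intros t ht. apply is_derive_Reals. apply Hd. lia. }
    assert (HM : Rabs (G 0%nat X - G 0%nat p) <= a1 * p).
    { replace (G 0%nat X - G 0%nat p) with (- (G 1%nat xi * (p - X))) by lra.
      rewrite Rabs_Ropp, Rabs_mult, (Rabs_right (p - X)) by lra.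
      pose proof (HB1 xi ltac:(lra)). pose proof (Rabs_pos (G 1%nat xi)).
      apply Rle_trans with (a1 * (p - X)). apply Rmult_le_compat_r; lra. apply Rmult_le_compat_l; lra. }
    assert (HR4 : Rabs R4 <= a1 * p + 3 * b).
    { unfold R4.
      replace (G 0%nat X - (G 0%nat p + G 1%nat p * (X - p) + G 2%nat p * (X - p) ^ 2 / 2 + G 3%nat p * (X - p) ^ 3 / 6))
        with ((G 0%nat X - G 0%nat p) - G 1%nat p * (X - p) - G 2%nat p * (X - p) ^ 2 / 2 - G 3%nat p * (X - p) ^ 3 / 6) by ring.
      assert (E1 : Rabs (G 1%nat p * (X - p)) <= b).
      { rewrite Rabs_mult. rewrite (Rabs_left1 (X - p)) by lra. pose proof (Rabs_pos (G 1%nat p)).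
        apply Rle_trans with (Rabs (G 1%nat p) * p). apply Rmult_le_compat_l; lra. auto. }
      assert (E2 : Rabs (G 2%nat p * (X - p) ^ 2 / 2) <= b).
      { unfold Rdiv. rewrite !Rabs_mult. rewrite <- RPow_abs, (Rabs_left1 (X - p)) by lra.
        rewrite (Rabs_right (/ 2)) by lra. pose proof (Rabs_pos (G 2%nat p)).
        assert ((- (X - p)) ^ 2 <= p ^ 2) by (apply pow_incr; lra).
        pose proof (pow_le (- (X - p)) 2 ltac:(lra)).
        apply Rle_trans with (Rabs (G 2%nat p) * p ^ 2 * 1). apply Rmult_le_compat; try lra.
        apply Rmult_le_pos; lra. apply Rmult_le_compat_l; lra. lra. }
      assert (E3 : Rabs (G 3%nat p * (X - p) ^ 3 / 6) <= b).
      { unfold Rdiv. rewrite !Rabs_mult. rewrite <- RPow_abs, (Rabs_left1 (X - p)) by lra.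
        rewrite (Rabs_right (/ 6)) by lra. pose proof (Rabs_pos (G 3%nat p)).
        assert ((- (X - p)) ^ 3 <= p ^ 3) by (apply pow_incr; lra).
        pose proof (pow_le (- (X - p)) 3 ltac:(lra)).
        apply Rle_trans with (Rabs (G 3%nat p) * p ^ 3 * 1). apply Rmult_le_compat; try lra.
        apply Rmult_le_pos; lra. apply Rmult_le_compat_l; lra. lra. }
      set (u0 := G 0%nat X - G 0%nat p) in *. set (u1 := G 1%nat p * (X - p)) in *.
      set (u2 := G 2%nat p * (X - p) ^ 2 / 2) in *. set (u3 := G 3%nat p * (X - p) ^ 3 / 6) in *.
      pose proof (Rabs_triang (u0 - u1 - u2) (- u3)); pose proof (Rabs_triang (u0 - u1) (- u2));
      pose proof (Rabs_triang u0 (- u1)). rewrite Rabs_Ropp in *. unfold Rminus in *. lra. }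
    assert (HR2 : Rabs R2 <= a2 + 2 * c).
    { unfold R2. pose proof (HB2 X ltac:(lra)).
      assert (Rabs (G 3%nat p * (X - p)) <= c).
      { rewrite Rabs_mult, (Rabs_left1 (X - p)) by lra. pose proof (Rabs_pos (G 3%nat p)).
        apply Rle_trans with (Rabs (G 3%nat p) * p). apply Rmult_le_compat_l; lra. auto. }
      pose proof (Rabs_triang (G 2%nat X - G 2%nat p) (- (G 3%nat p * (X - p)))).
      pose proof (Rabs_triang (G 2%nat X) (- G 2%nat p)). rewrite Rabs_Ropp in *. unfold Rminus in *. lra. }
    assert (HX2 : X / (2 * N) * Rabs R2 <= 4 * (a2 + 2 * c) / (N * p ^ 3) * (X - p) ^ 4).
    { assert (0 < p ^ 3) by (apply pow_lt; lra).
      apply Rle_trans with (p / (4 * N) * (a2 + 2 * c) * (16 * (X - p) ^ 4 / p ^ 4)).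
      - apply Rle_trans with (p / (4 * N) * (a2 + 2 * c)).
        + pose proof (Rabs_pos R2).
          assert (X / (2 * N) <= p / (4 * N)).
          { apply Rle_trans with ((p / 2) / (2 * N)). unfold Rdiv. apply Rmult_le_compat_r.
            left; apply Rinv_0_lt_compat; lra. lra. right; field; lra. }
          assert (0 <= X / (2 * N)) by (apply Rdiv_le_0_compat; lra).
          apply Rmult_le_compat; lra.
        + pose proof (Rabs_pos R2). assert (0 <= p / (4 * N) * (a2 + 2 * c)).
          { apply Rmult_le_pos; [apply Rdiv_le_0_compat|]; lra. } nra.
      - right. field. split; lra. }
    assert (HX4 : Rabs R4 <= 16 * (a1 * p + 3 * b) / p ^ 4 * (X - p) ^ 4).
    { replace (16 * (a1 * p + 3 * b) / p ^ 4 * (X - p) ^ 4) with ((a1 * p + 3 * b) * (16 * (X - p) ^ 4 / p ^ 4))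
        by (field; lra). nra. }
    lra.
Qed.

Lemma m2 a b c d : 0 <= a <= b -> 0 <= c <= d -> a * c <= b * d.
Proof. intros. apply Rmult_le_compat; lra. Qed.

Lemma final_arith (N p Dl c0 E G1 G4 d q g3 : R) :
  0 < N -> 0 < Dl < p -> 0 < c0 -> c0 <= N * p -> 0 <= E -> 0 <= G1 -> 0 <= G4 ->
  0 <= q <= d -> Rabs g3 <= E * q / p ->
  let iw := / c0 in
  let Bq := G4 * q / p ^ 2 in
  let Bc := Bq / (2 * N) in
  let A := Bq + 16 * (G1 * d * Dl * p + 3 * (E * q * p ^ 2)) / p ^ 4
           + 4 * (G1 * d + 2 * (E * q)) / (N * p ^ 3) in
  Rabs (- (g3 * (N * p)) / (3 * N ^ 3)) + (Bc * p * (N * p) / N ^ 2 + Bc * (N * p) / N ^ 3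
     + A * (3 * (N * p) ^ 2 + N * p) / N ^ 4)
  <= (E + G4 + G4 * iw + G4 * (3 + iw) + 16 * (G1 + 3 * E) * (3 + iw)
      + 4 * (G1 + 2 * E) * (3 * iw + iw * iw)) * (d / N ^ 2).
Proof.
  intros hN hDl hc0 hc0N hE hG1 hG4 hq hg3 iw Bq Bc A.
  assert (hp : 0 < p) by lra.
  set (z := d / N ^ 2). set (zq := q / N ^ 2). set (w := / (N * p)).
  assert (hN2 : 0 < N ^ 2) by (apply pow_lt; lra).
  assert (hz : 0 <= zq <= z).
  { unfold zq, z. split. apply Rdiv_le_0_compat; lra. unfold Rdiv. apply Rmult_le_compat_r.
    left; apply Rinv_0_lt_compat; lra. lra. }
  assert (hw : 0 <= w <= iw).
  { unfold w, iw. split. left; apply Rinv_0_lt_compat; nra. apply Rinv_le_contravar; lra. }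
  assert (hiw : 0 <= iw) by lra.
  assert (hs : 0 <= Dl / p <= 1).
  { split. apply Rdiv_le_0_compat; lra. apply (Rmult_le_reg_r p); auto. unfold Rdiv.
    rewrite Rmult_assoc, Rinv_l, Rmult_1_r, Rmult_1_l; lra. }
  assert (T0 : Rabs (- (g3 * (N * p)) / (3 * N ^ 3)) <= E * z).
  { unfold Rdiv at 1. rewrite Rabs_mult, Rabs_Ropp, Rabs_mult.
    rewrite (Rabs_right (N * p)) by nra. rewrite (Rabs_right (/ (3 * N ^ 3))).
    2:{ apply Rle_ge; left; apply Rinv_0_lt_compat. assert (0 < N ^ 3) by (apply pow_lt; lra). lra. }
    apply Rle_trans with (E * q / p * (N * p) * / (3 * N ^ 3)).
    - apply Rmult_le_compat_r. left; apply Rinv_0_lt_compat. assert (0 < N ^ 3) by (apply pow_lt; lra). lra.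
      apply Rmult_le_compat_r. nra. auto.
    - replace (E * q / p * (N * p) * / (3 * N ^ 3)) with (E * zq / 3) by (unfold zq; field; lra).
      nra. }
  assert (T1 : Bc * p * (N * p) / N ^ 2 <= G4 * z).
  { replace (Bc * p * (N * p) / N ^ 2) with (G4 * zq / 2) by (unfold Bc, Bq, zq; field; lra). nra. }
  assert (T2 : Bc * (N * p) / N ^ 3 <= G4 * iw * z).
  { replace (Bc * (N * p) / N ^ 3) with (G4 * (zq * w) / 2) by (unfold Bc, Bq, zq, w; field; lra).
    assert (zq * w <= z * iw) by (apply m2; lra). assert (0 <= zq * w) by nra.
    assert (G4 * (zq * w) <= G4 * (z * iw)) by (apply Rmult_le_compat_l; lra).
    assert (0 <= G4 * (zq * w)) by nra. lra. }
  assert (EA : A * (3 * (N * p) ^ 2 + N * p) / N ^ 4 =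
     G4 * zq * (3 + w) + 16 * (G1 * z * (Dl / p) + 3 * E * zq) * (3 + w)
     + 4 * (G1 * z + 2 * E * zq) * (3 * w + w * w)).
  { unfold A, Bq, z, zq, w. field. lra. }
  assert (T3 : G4 * zq * (3 + w) <= G4 * (3 + iw) * z).
  { assert (zq * (3 + w) <= z * (3 + iw)) by (apply m2; lra). nra. }
  assert (T4 : 16 * (G1 * z * (Dl / p) + 3 * E * zq) * (3 + w) <= 16 * (G1 + 3 * E) * (3 + iw) * z).
  { assert (G1 * z * (Dl / p) <= G1 * z) by (assert (0 <= G1 * z) by nra; nra).
    assert (0 <= G1 * z * (Dl / p)) by (assert (0 <= G1 * z) by nra; nra).
    assert ((G1 * z * (Dl / p) + 3 * E * zq) * (3 + w) <= ((G1 + 3 * E) * z) * (3 + iw)) by (apply m2; nra).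
    nra. }
  assert (T5 : 4 * (G1 * z + 2 * E * zq) * (3 * w + w * w) <= 4 * (G1 + 2 * E) * (3 * iw + iw * iw) * z).
  { assert (w * w <= iw * iw) by (apply m2; lra).
    assert ((G1 * z + 2 * E * zq) * (3 * w + w * w) <= ((G1 + 2 * E) * z) * (3 * iw + iw * iw)) by (apply m2; nra).
    nra. }
  rewrite EA. nra.
Qed.

Lemma pmf_nonneg lam k : 0 <= lam -> 0 <= poisson_pmf lam k.
Proof.
  intros. unfold poisson_pmf. apply Rdiv_le_0_compat.
  apply Rmult_le_pos. left; apply exp_pos. apply pow_le; auto.
  apply INR_fact_lt_0.
Qed.

Lemma exr_le (a b : nat -> R) : (forall k, Rabs (a k) <= b k) -> ex_series b -> ex_series a.
Proof. intros H1 H2. apply (@ex_series_le R_AbsRing R_CompleteNormedModule a b); auto. Qed.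

Lemma Qmul al k x : 0 < x -> Q al k x * x ^ k = Rpower x al.
Proof. intros. unfold Q. field. apply pow_nonzero. lra. Qed.

Theorem lemma6 :
  forall (alpha : R) (phi : R -> R) (D : nat -> R -> R) (W c c' : R),
    0 < alpha < 1 ->
    (forall x, 0 <= x <= 1 -> 0 <= phi x) ->
    C4_derivs_I01 phi D ->
    0 < W ->
    (forall x, 0 < x <= 1 ->
       (2 - alpha) * (3 - alpha) * (4 - alpha) * W * Rpower x (alpha - 4) + c'
         <= Rabs (D 4%nat x) /\
       Rabs (D 4%nat x)
         <= (2 - alpha) * (3 - alpha) * (4 - alpha) * W * Rpower x (alpha - 4) + c) ->
    forall c0 : R, 0 < c0 ->
    exists C : R, 0 < C /\
      forall (n : nat) (Delta p : R),
        (1 <= n)%nat ->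
        0 < Delta <= 1 ->
        c0 / INR n <= Delta ->
        Delta < p -> p <= 1 ->
        ex_series (fun k => poisson_pmf (INR n * p) k * estimator_err phi D n Delta p k) /\
        Rabs (Series (fun k => poisson_pmf (INR n * p) k * estimator_err phi D n Delta p k))
          <= C * (1 / (INR n ^ 2 * Rpower Delta (2 - alpha)) + p / INR n ^ 2).
Proof.
  intros al phi D W c c' hal hphi HC4 hW HD4 c0 hc0.
  pose proof (HDp_of_C4 phi D HC4) as HDp.
  assert (HD4' : exists K c, 0 <= K /\ 0 <= c /\
     forall t, 0 < t <= 1 -> Rabs (Dp phi D 4 t) <= K * Rpower t (al - INR 4) + c).
  { exists ((2 - al) * (3 - al) * (4 - al) * W), (Rabs c). split; [|split].
    - repeat apply Rmult_le_pos; lra.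
    - apply Rabs_pos.
    - intros t ht. replace (INR 4) with 4 by (simpl; ring). simpl Dp.
      destruct (HD4 t ht) as [_ H]. pose proof (Rle_abs c). lra. }
  destruct (Dbounds phi D al hal HDp HD4') as [E [hE DB]].
  set (G1 := 64 * B0 * E + E).
  set (G4 := 1024 * B0 * E + 16 * E + B0 * M1 D).
  assert (hB0 : 0 < B0) by (unfold B0; lra).
  assert (hG1 : 0 <= G1) by (unfold G1; nra).
  assert (hG4 : 0 <= G4) by (unfold G4; pose proof (M1_pos D); nra).
  set (iw := / c0).
  set (K := E + G4 + G4 * iw + G4 * (3 + iw) + 16 * (G1 + 3 * E) * (3 + iw)
      + 4 * (G1 + 2 * E) * (3 * iw + iw * iw)).
  assert (hiw : 0 < iw) by (apply Rinv_0_lt_compat; auto).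
  assert (hK : 0 <= K) by (unfold K; nra).
  exists (K + 1). split. lra.
  intros n Dl p hn hDl hc0n hDp hp1.
  set (N := INR n) in *.
  assert (hN : 1 <= N) by (unfold N; apply (le_INR 1 n) in hn; simpl in hn; lra).
  assert (hDl' : 0 < Dl < 1) by lra.
  assert (hp : 0 < p) by lra.
  assert (hlam : c0 <= N * p).
  { assert (c0 <= N * Dl).
    { apply (Rmult_le_compat_l N) in hc0n; [|lra]. replace (N * (c0 / N)) with c0 in hc0n by (field; lra). lra. }
    nra. }
  set (G := g phi D Dl).
  assert (Hd : forall i t, (i <= 3)%nat -> is_derive (G i) t (G (S i) t)).
  { intros. apply g_der; auto. }
  assert (HDer1 : forall t, Derive (phibar phi D Dl) t = G 1%nat t).
  { intros t. apply is_derive_unique. apply (is_derive_ext (G 0%nat)).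
    intros; symmetry; apply phibar_g; auto. apply Hd; lia. }
  assert (HDer2 : forall t, Derive_n (phibar phi D Dl) 2 t = G 2%nat t).
  { intros t. simpl. rewrite (Derive_ext _ _ _ HDer1). apply is_derive_unique, Hd; lia. }
  assert (HGp : forall i, G i p = Dp phi D i p) by (intros; apply gC; lra).
  set (g1 := G 1%nat p). set (g2 := G 2%nat p). set (g3 := G 3%nat p).
  set (d := Q al 2 Dl). set (q := Q al 2 p).
  assert (hd : 0 < d) by (apply Q_pos; lra).
  assert (hq : 0 < q) by (apply Q_pos; lra).
  assert (hqd : q <= d) by (apply Q_dec; (lra || lia)).
  assert (Q4 : Q al 4 p = q / p ^ 2) by (unfold q, Q; field; lra).
  assert (Q3 : Q al 3 p = q / p) by (unfold q, Q; field; lra).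
  assert (Q1 : Q al 1 p = q * p) by (unfold q, Q; field; lra).
  assert (Q1D : Q al 1 Dl = d * Dl) by (unfold d, Q; field; lra).
  assert (hg1 : Rabs g1 <= E * (q * p)) by (unfold g1; rewrite HGp, <- Q1; apply DB; (lra || lia)).
  assert (hg2 : Rabs g2 <= E * q) by (unfold g2; rewrite HGp; apply DB; (lra || lia)).
  assert (hg3 : Rabs g3 <= E * q / p) by (unfold g3; rewrite HGp; replace (E * q / p) with (E * Q al 3 p) by (rewrite Q3; field; lra); apply DB; (lra || lia)).
  set (lam := N * p).
  set (Bq := G4 * q / p ^ 2).
  set (Bc := Bq / (2 * N)).
  set (Aco := Bq + 16 * (G1 * d * Dl * p + 3 * (E * q * p ^ 2)) / p ^ 4
           + 4 * (G1 * d + 2 * (E * q)) / (N * p ^ 3)).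
  set (err := estimator_err phi D n Dl p).
  set (b0 := - g2 * p / (2 * N)).
  set (b1 := g1 / N - g2 / (2 * N ^ 2) - g3 * p / (2 * N ^ 2)).
  set (b2 := g2 / (2 * N ^ 2) - g3 / (2 * N ^ 3)).
  set (b3 := g3 / (6 * N ^ 3)).
  set (poly := fun k : nat => b0 + b1 * (INR k - lam) + b2 * (INR k - lam) ^ 2
                   + b3 * (INR k - lam) ^ 3 + 0 * (INR k - lam) ^ 4).
  set (bnd := fun k : nat => 0 + 0 * (INR k - lam) + (Bc * p / N ^ 2) * (INR k - lam) ^ 2
                   + (Bc / N ^ 3) * (INR k - lam) ^ 3 + (Aco / N ^ 4) * (INR k - lam) ^ 4).
  assert (Hpoly : is_series (fun k => poisson_pmf lam k * poly k)
     (b0 + b2 * lam + b3 * lam + 0 * (3 * lam ^ 2 + lam))) by apply pois_cpoly.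
  assert (Hbnd : is_series (fun k => poisson_pmf lam k * bnd k)
     (0 + (Bc * p / N ^ 2) * lam + (Bc / N ^ 3) * lam + (Aco / N ^ 4) * (3 * lam ^ 2 + lam))) by apply pois_cpoly.
  assert (Hpt : forall k, Rabs (err k - poly k) <= bnd k).
  { intros k. set (X := INR k / N).
    assert (hX : 0 <= X) by (unfold X; apply Rdiv_le_0_compat; [apply pos_INR|lra]).
    assert (Eerr : err k = G 0%nat X - X / (2 * N) * G 2%nat X - G 0%nat p).
    { unfold err, estimator_err. rewrite phibar_g, HDer2 by auto. fold G. fold N. fold X.
      rewrite (HGp 0%nat). simpl Dp. unfold X. field. lra. }
    pose proof (pointwise G p N X Bq (G1 * d * Dl) (G1 * d) (E * q * p ^ 2) (E * q) Hd hp ltac:(lra) hX)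
      as PW.
    assert (Ebnd : bnd k = Aco * (X - p) ^ 4 + Bc * X * (X - p) ^ 2).
    { unfold bnd, X, lam. field. lra. }
    rewrite Ebnd.
    replace (err k - poly k) with
      ((G 0%nat X - (G 0%nat p + G 1%nat p * (X - p) + G 2%nat p * (X - p) ^ 2 / 2
        + G 3%nat p * (X - p) ^ 3 / 6)) - X / (2 * N) * (G 2%nat X - G 2%nat p - G 3%nat p * (X - p))).
    2:{ rewrite Eerr. unfold poly, b0, b1, b2, b3, g1, g2, g3, X, lam. field. lra. }
    unfold Aco, Bc. apply PW.
    - unfold Bq. apply Rdiv_le_0_compat. nra. apply pow_lt; lra.
    - apply Rmult_le_pos; [apply Rmult_le_pos|]; lra.
    - apply Rmult_le_pos; lra.
    - apply Rmult_le_pos; [apply Rmult_le_pos; lra| apply pow_le; lra].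
    - apply Rmult_le_pos; lra.
    - intros t ht. unfold Bq. unfold Rdiv. rewrite Rmult_assoc. fold (q / p ^ 2). rewrite <- Q4.
      apply BF4; auto; lra.
    - intros t ht. rewrite Rmult_assoc, <- Q1D. apply BF1; auto; (lia || lra).
    - intros t ht. apply BF1; auto; (lia || lra).
    - fold g1. pose proof (Rabs_pos g1). replace (E * q * p ^ 2) with (E * (q * p) * p) by ring.
      apply Rmult_le_compat_r; lra.
    - fold g2. pose proof (Rabs_pos g2). replace (E * q * p ^ 2) with (E * q * p ^ 2) by ring.
      apply Rmult_le_compat_r; [apply pow_le; lra| lra].
    - fold g3. pose proof (Rabs_pos g3). replace (E * q * p ^ 2) with (E * q / p * p ^ 3) by (field; lra).
      apply Rmult_le_compat_r; [apply pow_le; lra| lra].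
    - fold g2. lra.
    - fold g3. replace (E * q) with (E * q / p * p) by (field; lra). apply Rmult_le_compat_r; lra. }
  assert (Hpmf : forall k, 0 <= poisson_pmf lam k) by (intros; apply pmf_nonneg; unfold lam; nra).
  assert (HbndS : forall k, Rabs (poisson_pmf lam k * (err k - poly k)) <= poisson_pmf lam k * bnd k).
  { intros k. rewrite Rabs_mult, (Rabs_right (poisson_pmf lam k)) by (apply Rle_ge; auto).
    apply Rmult_le_compat_l; auto. }
  assert (Exb : ex_series (fun k => poisson_pmf lam k * bnd k)) by (eexists; exact Hbnd).
  assert (Exr : ex_series (fun k => poisson_pmf lam k * (err k - poly k))).
  { apply (exr_le _ (fun k => poisson_pmf lam k * bnd k)); auto. }
  assert (Exra : ex_series (fun k => Rabs (poisson_pmf lam k * (err k - poly k)))).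
  { apply (exr_le _ (fun k => poisson_pmf lam k * bnd k)); auto. intros k.
    rewrite Rabs_Rabsolu. auto. }
  assert (Exp : ex_series (fun k => poisson_pmf lam k * poly k)) by (eexists; exact Hpoly).
  assert (Eeq : forall k, poisson_pmf lam k * err k =
     poisson_pmf lam k * poly k + poisson_pmf lam k * (err k - poly k)).
  { intros; ring. }
  split.
  - apply (ex_series_ext (fun k => poisson_pmf lam k * poly k + poisson_pmf lam k * (err k - poly k))).
    intros; symmetry; apply Eeq. exact (ex_series_plus _ _ Exp Exr).
  - rewrite (Series_ext _ _ Eeq), Series_plus by auto. rewrite (is_series_unique _ _ Hpoly).
    assert (Hr : Rabs (Series (fun k => poisson_pmf lam k * (err k - poly k))) <=
       0 + Bc * p / N ^ 2 * lam + Bc / N ^ 3 * lam + Aco / N ^ 4 * (3 * lam ^ 2 + lam)).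
    { eapply Rle_trans. apply Series_Rabs; auto. rewrite <- (is_series_unique _ _ Hbnd).
      apply Series_le; auto. intros k; split; [apply Rabs_pos| auto]. }
    set (vp := b0 + b2 * lam + b3 * lam + 0 * (3 * lam ^ 2 + lam)) in *.
    set (Sr := Series (fun k => poisson_pmf lam k * (err k - poly k))) in *.
    assert (Evp : vp = - (g3 * (N * p)) / (3 * N ^ 3)) by (unfold vp, b0, b2, b3, lam; field; lra).
    assert (Evb : 0 + Bc * p / N ^ 2 * lam + Bc / N ^ 3 * lam + Aco / N ^ 4 * (3 * lam ^ 2 + lam)
       = Bc * p * (N * p) / N ^ 2 + Bc * (N * p) / N ^ 3 + Aco * (3 * (N * p) ^ 2 + N * p) / N ^ 4)
      by (unfold lam; field; lra).
    pose proof (final_arith N p Dl c0 E G1 G4 d q g3 ltac:(lra) ltac:(lra) hc0 hlam ltac:(lra) hG1 hG4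
       ltac:(lra) hg3) as FA.
    cbv zeta in FA. fold iw in FA. fold K in FA.
    fold Bq in FA. fold Bc in FA. fold Aco in FA.
    rewrite <- Evp, <- Evb in FA.
    assert (ER : Rpower Dl (2 - al) = / d).
    { replace (2 - al) with (- (al - INR 2)) by (simpl; ring). rewrite Rpower_Ropp.
      rewrite rp_split by lra. reflexivity. }
    rewrite ER.
    replace (1 / (N ^ 2 * / d)) with (d / N ^ 2) by (field; lra).
    assert (0 <= p / N ^ 2) by (apply Rdiv_le_0_compat; [lra| apply pow_lt; lra]).
    assert (0 <= d / N ^ 2) by (apply Rdiv_le_0_compat; [lra| apply pow_lt; lra]).
    pose proof (Rabs_triang vp Sr).
    apply Rle_trans with (K * (d / N ^ 2)). lra. nra.
Qed.
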